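(* Let $p,l$ be distinct odd primes and let $\Gamma$, $\Gamma_p$, $\ell$, $n(\cdot)$ be as in the context. Let $a=\psi(x)\in\Gamma_p\setminus\{1\}$ with $x\in\tilde\Gamma$, and let $n=n(x)$. The following are equivalent: (a) $p\nmid n$; (b) $\ell(a^2)=2\ell(a)$; (c) $\left(\frac{-n}{p}\right)=1$. Similarly, for $b=\psi(y)\in\Gamma_l\setminus\{1\}$ with $y\in\tilde\Gamma$ and $n=n(y)$, the following are equivalent: $l\nmid n$; $\ell(b^2)=2\ell(b)$; $\left(\frac{-n}{l}\right)=1$.
   Context: Let $p,l$ be distinct odd primes. Let $\mathbb H(\mathbb Z)$ be the ring of quaternions $x=x_0+x_1i+x_2j+x_3k$ with $x_0,\dots,x_3\in\mathbb Z$, where $i^2=j^2=k^2=-1$, $ij=-ji=k$; write $|x|^2=x_0^2+x_1^2+x_2^2+x_3^2$. Fix $c_p,d_p\in\mathbb Q_p$ with $c_p^2+d_p^2+1=0$ and $c_l,d_l\in\mathbb Q_l$ with $c_l^2+d_l^2+1=0$. Define $\psi:\mathbb H(\mathbb Z)\setminus\{0\}\to G:=PGL_2(\mathbb Q_p)\times PGL_2(\mathbb Q_l)$ by sending $x$ to the class of the pair $\left(\begin{pmatrix} x_0+x_1c_p+x_3d_p & -x_1d_p+x_2+x_3c_p\\ -x_1d_p-x_2+x_3c_p & x_0-x_1c_p-x_3d_p\end{pmatrix},\begin{pmatrix} x_0+x_1c_l+x_3d_l & -x_1d_l+x_2+x_3c_l\\ -x_1d_l-x_2+x_3c_l & x_0-x_1c_l-x_3d_l\end{pmatrix}\right)$.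 Let $\tilde\Gamma$ be the set of $x\in\mathbb H(\mathbb Z)$ such that $|x|^2=p^rl^s$ for some integers $r,s\ge 0$, and such that $x_0$ is odd and $x_1,x_2,x_3$ are even if $|x|^2\equiv 1\pmod 4$, while $x_1$ is even and $x_0,x_2,x_3$ are odd if $|x|^2\equiv 3\pmod 4$. Then $\Gamma=\psi(\tilde\Gamma)$ is a torsion-free lattice in $G$. Let $\tilde A=\{x\in\tilde\Gamma: x_0>0,\ |x|^2=p\}$, $\tilde B=\{y\in\tilde\Gamma: y_0>0,\ |y|^2=l\}$; $\Gamma_p=\langle\psi(\tilde A)\rangle$ and $\Gamma_l=\langle\psi(\tilde B)\rangle$ are free, and $\psi(\tilde A)\cup\psi(\tilde B)$ generates $\Gamma$. For $\gamma\in\Gamma$, $\ell(\gamma)$ is the word length of $\gamma$ with respect to the generating set $\psi(\tilde A)\cup\psi(\tilde B)$. Any $x\in\tilde\Gamma$ with $\psi(x)\ne 1$ can be written $x=x_0+z_0(c_1i+c_2j+c_3k)$ with $z_0\in\mathbb Z\setminus\{0\}$ and $c_1,c_2,c_3\in\mathbb Z$ relatively prime; set $n(x)=c_1^2+c_2^2+c_3^2$. For a prime $q$, $\left(\frac{m}{q}\right)$ is the Legendre symbol (equal to $0$ if $q\mid m$). *)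

(* Defs.v *)
From HB Require Import structures.
From mathcomp Require Import all_boot all_order all_algebra.
From Stdlib Require Import ClassicalEpsilon.
Set Implicit Arguments. Unset Strict Implicit. Unset Printing Implicit Defensive.
Import Order.TTheory GRing.Theory Num.Theory.
Local Open Scope ring_scope.

(* Integer quaternions x = x0 + x1 i + x2 j + x3 k. *)
Record quat := Quat { q0 : int; q1 : int; q2 : int; q3 : int }.

Definition qnorm2 (x : quat) : int :=
  q0 x ^+ 2 + q1 x ^+ 2 + q2 x ^+ 2 + q3 x ^+ 2.

Definition zodd (z : int) : bool := ~~ (2 %| z)%Z.

Definition in_Gtilde (p l : nat) (x : quat) : Prop :=
  (exists r s : nat, qnorm2 x = ((p ^ r * l ^ s)%N)%:Z) /\
  (((qnorm2 x %% 4)%Z = 1 ->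
      [/\ zodd (q0 x), ~~ zodd (q1 x), ~~ zodd (q2 x) & ~~ zodd (q3 x)]) /\
   ((qnorm2 x %% 4)%Z = 3 ->
      [/\ ~~ zodd (q1 x), zodd (q0 x), zodd (q2 x) & zodd (q3 x)])).

(* the matrix component of psi over a field F with c^2+d^2+1 = 0 *)
Definition psi_mat (F : fieldType) (c d : F) (x : quat) : 'M[F]_2 :=
  let x0 : F := (q0 x)%:~R in let x1 : F := (q1 x)%:~R in
  let x2 : F := (q2 x)%:~R in let x3 : F := (q3 x)%:~R in
  \matrix_(i < 2, j < 2)
    (if (i == 0%N :> nat) && (j == 0%N :> nat) then x0 + x1 * c + x3 * d
     else if (i == 0%N :> nat) then - (x1 * d) + x2 + x3 * c
     else if (j == 0%N :> nat) then - (x1 * d) - x2 + x3 * c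
     else x0 - x1 * c - x3 * d).

(* representatives of elements of G = PGL_2(F_p) x PGL_2(F_l) *)
Definition Gpair (Fp Fl : fieldType) := ('M[Fp]_2 * 'M[Fl]_2)%type.

Definition gmul (Fp Fl : fieldType) (A B : Gpair Fp Fl) : Gpair Fp Fl :=
  (A.1 *m B.1, A.2 *m B.2).
Definition ginv (Fp Fl : fieldType) (A : Gpair Fp Fl) : Gpair Fp Fl :=
  (invmx A.1, invmx A.2).
Definition gone (Fp Fl : fieldType) : Gpair Fp Fl := (1%:M, 1%:M).

(* equality in PGL_2 x PGL_2: equality up to (independent) nonzero scalars *)
Definition pgl_eq (Fp Fl : fieldType) (A B : Gpair Fp Fl) : Prop :=
  exists (lp : Fp) (ll : Fl), lp != 0 /\ ll != 0 /\
    B.1 = lp *: A.1 /\ B.2 = ll *: A.2.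

Definition psi (Fp Fl : fieldType) (cp dp : Fp) (cl dl : Fl) (x : quat)
  : Gpair Fp Fl := (psi_mat cp dp x, psi_mat cl dl x).

Definition word_val (Fp Fl : fieldType) (cp dp : Fp) (cl dl : Fl)
  (w : seq (bool * quat)) : Gpair Fp Fl :=
  foldr (fun bs acc =>
           gmul (if bs.1 then psi cp dp cl dl bs.2
                 else ginv (psi cp dp cl dl bs.2)) acc)
        (gone Fp Fl) w.

(* \tilde A (q = p) and \tilde B (q = l) *)
Definition in_tildeAB (p l q : nat) (x : quat) : Prop :=
  in_Gtilde p l x /\ 0 < q0 x /\ qnorm2 x = q%:Z.

Definition gen_letter (p l : nat) (s : quat) : Prop :=
  in_tildeAB p l p s \/ in_tildeAB p l l s.

Definition is_word_length (Fp Fl : fieldType) (cp dp : Fp) (cl dl : Fl)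
  (p l : nat) (g : Gpair Fp Fl) (k : nat) : Prop :=
  (exists w, size w = k /\ (forall bs, List.In bs w -> gen_letter p l bs.2)
             /\ pgl_eq (word_val cp dp cl dl w) g) /\
  (forall w, (forall bs, List.In bs w -> gen_letter p l bs.2) ->
             pgl_eq (word_val cp dp cl dl w) g -> (k <= size w)%N).

Definition ell (Fp Fl : fieldType) (cp dp : Fp) (cl dl : Fl)
  (p l : nat) (g : Gpair Fp Fl) : nat :=
  epsilon (inhabits 0%N) (is_word_length cp dp cl dl p l g).

Definition in_Gamma_q (Fp Fl : fieldType) (cp dp : Fp) (cl dl : Fl)
  (p l q : nat) (g : Gpair Fp Fl) : Prop :=
  exists w, (forall bs, List.In bs w -> in_tildeAB p l q bs.2) /\
            pgl_eq (word_val cp dp cl dl w) g.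

Definition legendre (m : int) (q : nat) : int :=
  if (q%:Z %| m)%Z then 0
  else if [exists y : 'I_q, (q%:Z %| (y%:Z) ^+ 2 - m)%Z] then 1 else -1.

(* Main.v *)
Require Import Defs.
From HB Require Import structures.
From mathcomp Require Import all_boot all_order all_algebra.
From mathcomp Require Import ring lra zify.
From Stdlib Require Import Classical ClassicalEpsilon.
Import Order.TTheory GRing.Theory Num.Theory.
Local Open Scope ring_scope.
Set Implicit Arguments. Unset Strict Implicit. Unset Printing Implicit Defensive.

Lemma zprimeM (q : nat) (a b : int) : prime q ->
  (q%:Z %| a * b)%Z = (q%:Z %| a)%Z || (q%:Z %| b)%Z.
Proof. by move=> pq; rewrite !dvdzE abszM Euclid_dvdM. Qed.

Lemma zprimeX (q : nat) (a : int) (k : nat) : prime q -> (0 < k)%N ->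
  (q%:Z %| a ^+ k)%Z = (q%:Z %| a)%Z.
Proof. by move=> pq k0; rewrite !dvdzE abszX Euclid_dvdX // k0 andbT. Qed.

Lemma zprime2 (q : nat) : prime q -> odd q -> ~~ (q%:Z %| 2)%Z.
Proof.
move=> pq oq; rewrite dvdzE /=; apply/negP => /dvdn_leq => /(_ isT).
case: q pq oq => [|[|[|q]]] //.
Qed.

Lemma zprime1 (q : nat) : prime q -> ~~ (q%:Z %| 1)%Z.
Proof. by move=> pq; rewrite dvdzE /= Euclid_dvd1. Qed.

Definition qmul (a b : quat) : quat :=
  Quat (q0 a * q0 b - q1 a * q1 b - q2 a * q2 b - q3 a * q3 b)
       (q0 a * q1 b + q1 a * q0 b + q2 a * q3 b - q3 a * q2 b)
       (q0 a * q2 b - q1 a * q3 b + q2 a * q0 b + q3 a * q1 b)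
       (q0 a * q3 b + q1 a * q2 b - q2 a * q1 b + q3 a * q0 b).
Definition qconj (a : quat) : quat := Quat (q0 a) (- q1 a) (- q2 a) (- q3 a).
Definition qsc (k : int) (a : quat) : quat := Quat (k * q0 a) (k * q1 a) (k * q2 a) (k * q3 a).
Definition qscal (k : int) : quat := Quat k 0 0 0.
Definition qone : quat := qscal 1.

Lemma quatE (a : quat) : a = Quat (q0 a) (q1 a) (q2 a) (q3 a).
Proof. by case: a. Qed.

Ltac qring := rewrite /qmul /qconj /qsc /qscal /qone /qnorm2 /=; congr Quat; ring.

Lemma qmulA a b c : qmul a (qmul b c) = qmul (qmul a b) c.
Proof. qring. Qed.
Lemma qmul1 a : qmul a qone = a.
Proof. by rewrite [RHS]quatE; qring. Qed.
Lemma qmul1l a : qmul qone a = a.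
Proof. by rewrite [RHS]quatE; qring. Qed.
Lemma qmul_conj a : qmul a (qconj a) = qscal (qnorm2 a).
Proof. qring. Qed.
Lemma qmul_conjl a : qmul (qconj a) a = qscal (qnorm2 a).
Proof. qring. Qed.
Lemma qmul_scall k a : qmul (qscal k) a = qsc k a.
Proof. qring. Qed.
Lemma qmul_scalr k a : qmul a (qscal k) = qsc k a.
Proof. qring. Qed.
Lemma qsc_mull k a b : qmul (qsc k a) b = qsc k (qmul a b).
Proof. qring. Qed.
Lemma qsc_mulr k a b : qmul a (qsc k b) = qsc k (qmul a b).
Proof. qring. Qed.
Lemma qscM k m a : qsc k (qsc m a) = qsc (k * m) a.
Proof. qring. Qed.
Lemma qsc1 a : qsc 1 a = a.
Proof. by rewrite [RHS]quatE; qring. Qed.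
Lemma qnorm2M a b : qnorm2 (qmul a b) = qnorm2 a * qnorm2 b.
Proof. rewrite /qnorm2 /qmul /=; ring. Qed.
Lemma qnorm2_conj a : qnorm2 (qconj a) = qnorm2 a.
Proof. rewrite /qnorm2 /qconj /=; ring. Qed.
Lemma qnorm2_sc k a : qnorm2 (qsc k a) = k ^+ 2 * qnorm2 a.
Proof. rewrite /qnorm2 /qsc /=; ring. Qed.
Lemma qconjK a : qconj (qconj a) = a.
Proof. by rewrite [RHS]quatE /qconj /= !opprK. Qed.

Lemma qnorm2_ge0 a : 0 <= qnorm2 a.
Proof. by rewrite /qnorm2 !addr_ge0 // sqr_ge0. Qed.



Lemma qsc_inj k a b : k != 0 -> qsc k a = qsc k b -> a = b.
Proof.
move=> k0 [e0 e1 e2 e3]; rewrite (quatE a) (quatE b).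
by congr Quat; apply: (mulfI k0).
Qed.

Definition qdvd (d : int) (a : quat) : bool :=
  [&& (d %| q0 a)%Z, (d %| q1 a)%Z, (d %| q2 a)%Z & (d %| q3 a)%Z].

Lemma qdvdP d a : d != 0 -> reflect (exists b, a = qsc d b) (qdvd d a).
Proof.
move=> d0; apply: (iffP idP).
  case/and4P => /dvdzP[b0 e0] /dvdzP[b1 e1] /dvdzP[b2 e2] /dvdzP[b3 e3].
  by exists (Quat b0 b1 b2 b3); rewrite (quatE a) e0 e1 e2 e3 /qsc /=; congr Quat; ring.
by case=> b ->; rewrite /qdvd /qsc /= !dvdz_mulr.
Qed.

Lemma qdvd_mull d a b : qdvd d b -> qdvd d (qmul a b).
Proof.
case/and4P => h0 h1 h2 h3; rewrite /qdvd /qmul /=.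
by rewrite !rpredD ?rpredN ?dvdz_mull.
Qed.
Lemma qdvd_mulr d a b : qdvd d a -> qdvd d (qmul a b).
Proof.
case/and4P => h0 h1 h2 h3; rewrite /qdvd /qmul /=.
by rewrite !rpredD ?rpredN ?dvdz_mulr.
Qed.

Definition qadd (a b : quat) : quat := Quat (q0 a + q0 b) (q1 a + q1 b) (q2 a + q2 b) (q3 a + q3 b).

Lemma small_identity u x :
  qadd (qmul (qmul u x) u) (qsc (qnorm2 u) (qconj x)) = qsc (2 * q0 (qmul u x)) u.
Proof. rewrite /qadd /qmul /qconj /qsc /qnorm2 /=; congr Quat; ring. Qed.

Lemma qmul_addr a b c : qmul a (qadd b c) = qadd (qmul a b) (qmul a c).
Proof. rewrite /qadd /qmul /=; congr Quat; ring. Qed.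

Lemma key_identity s r Q y :
  qadd (qmul (qmul (qmul s (qmul r Q)) y) r) (qsc (qnorm2 r) (qmul s (qconj (qmul Q y))))
  = qsc (2 * q0 (qmul (qmul r Q) y)) (qmul s r).
Proof.
have -> : qmul (qmul (qmul s (qmul r Q)) y) r = qmul s (qmul (qmul r (qmul Q y)) r).
  by rewrite !qmulA.
by rewrite -qsc_mulr -qmul_addr small_identity qsc_mulr qmulA.
Qed.

Lemma qdvd_addl d a b : qdvd d (qadd a b) -> qdvd d b -> qdvd d a.
Proof.
case/and4P => h0 h1 h2 h3 /and4P[g0 g1 g2 g3]; apply/and4P; split.
- by rewrite -(addrK (q0 b) (q0 a)) rpredB.
- by rewrite -(addrK (q1 b) (q1 a)) rpredB.
- by rewrite -(addrK (q2 b) (q2 a)) rpredB.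
- by rewrite -(addrK (q3 b) (q3 a)) rpredB.
Qed.

Lemma qdvd_sc d k a : (d %| k)%Z -> qdvd d (qsc k a).
Proof. by move=> h; rewrite /qdvd /qsc /= !dvdz_mulr. Qed.

Lemma qdvd_sc_prime (q : nat) k a : prime q -> ~~ (q%:Z %| k)%Z ->
  qdvd q (qsc k a) -> qdvd q a.
Proof.
move=> pq nk /and4P[]; rewrite /qsc /= !zprimeM // (negbTE nk) /= => *.
by apply/and4P.
Qed.

Lemma re_i P : q0 (qmul P (Quat 0 (-1) 0 0)) = q1 P.
Proof. rewrite /qmul /=; ring. Qed.
Lemma re_j P : q0 (qmul P (Quat 0 0 (-1) 0)) = q2 P.
Proof. rewrite /qmul /=; ring. Qed.
Lemma re_k P : q0 (qmul P (Quat 0 0 0 (-1))) = q3 P.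
Proof. rewrite /qmul /=; ring. Qed.

Lemma key_step (q : nat) s r Q : prime q -> odd q ->
  (q%:Z %| qnorm2 r)%Z -> ~~ qdvd q (qmul r Q) -> qdvd q (qmul s (qmul r Q)) ->
  qdvd q (qmul s r).
Proof.
move=> pq oq hr nP hsP.
have gen y : ~~ (q%:Z %| q0 (qmul (qmul r Q) y))%Z -> qdvd q (qmul s r).
  move=> ny.
  have E := key_identity s r Q y.
  have H1 : qdvd q (qmul (qmul (qmul s (qmul r Q)) y) r).
    exact: (qdvd_mulr _ (qdvd_mulr _ hsP)).
  have H2 : qdvd q (qsc (qnorm2 r) (qmul s (qconj (qmul Q y)))).
    exact: (qdvd_sc _ hr).
  have H3 : qdvd q (qsc (2 * q0 (qmul (qmul r Q) y)) (qmul s r)).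
    rewrite -E.
    move: H1 H2 => /and4P[a0 a1 a2 a3] /and4P[b0 b1 b2 b3].
    by apply/and4P; split; apply: rpredD.
  apply: (qdvd_sc_prime pq _ H3).
  by rewrite zprimeM // negb_or zprime2.
have [h0|h0] := boolP (q%:Z %| q0 (qmul r Q))%Z; last first.
  by apply: (gen qone); rewrite qmul1.
have [h1|h1] := boolP (q%:Z %| q1 (qmul r Q))%Z; last first.
  by apply: (gen (Quat 0 (-1) 0 0)); rewrite re_i.
have [h2|h2] := boolP (q%:Z %| q2 (qmul r Q))%Z; last first.
  by apply: (gen (Quat 0 0 (-1) 0)); rewrite re_j.
have [h3|h3] := boolP (q%:Z %| q3 (qmul r Q))%Z; last first.
  by apply: (gen (Quat 0 0 0 (-1))); rewrite re_k.
by case/negP: nP; apply/and4P.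
Qed.

Section TA.
Variables (p l q : nat).
Hypothesis oq : odd q.
Hypothesis pq : prime q.

Lemma inA_norm s : in_tildeAB p l q s -> qnorm2 s = q%:Z.
Proof. by case=> _ []. Qed.

Lemma inA_pos s : in_tildeAB p l q s -> 0 < q0 s.
Proof. by case=> _ []. Qed.

Lemma inA_conj s : in_tildeAB p l q s -> in_tildeAB p l q (qconj s).
Proof.
case=> [[ex [h1 h3]] [pos n]]; rewrite /in_tildeAB /in_Gtilde qnorm2_conj /=.
split; last by [].
split; first by [].
by rewrite /zodd !rpredN.
Qed.

Lemma inA_par s : in_tildeAB p l q s ->
  ((q %% 4 = 1)%N /\ ~~ (2 %| q0 s)%Z /\ (2 %| q1 s)%Z /\ (2 %| q2 s)%Z /\ (2 %| q3 s)%Z) \/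
  ((q %% 4 = 3)%N /\ ~~ (2 %| q0 s)%Z /\ (2 %| q1 s)%Z /\ ~~ (2 %| q2 s)%Z /\ ~~ (2 %| q3 s)%Z).
Proof.
case=> [[ex [h1 h3]] [pos n]]; rewrite n in h1 h3.
have : (q %% 4 = 1)%N \/ (q %% 4 = 3)%N.
  move: oq; rewrite -[odd q]/(odd q) => oq'.
  have : (q %% 2 = 1)%N by rewrite modn2 oq'.
  lia.
case=> e.
  left; split=> //.
  have := h1; rewrite modz_nat e => /(_ erefl) [].
  by case=> a b c d; rewrite /zodd ?negbK in a b c d.
right; split=> //.
have := h3; rewrite modz_nat e => /(_ erefl) [].
by case=> a b c d; rewrite /zodd ?negbK in a b c d.
Qed.

Lemma unit_arg s t : in_tildeAB p l q s -> in_tildeAB p l q t ->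
  forall Y, qmul s t = qsc q Y -> t = qconj s.
Proof.
move=> hs ht Y e.
have q0' : (q%:Z != 0) by rewrite eqz_nat -lt0n prime_gt0.
have nY : qnorm2 Y = 1.
  have := congr1 qnorm2 e; rewrite qnorm2M qnorm2_sc (inA_norm hs) (inA_norm ht).
  move=> E; apply/(mulfI q0')/(mulfI q0').
  by rewrite mulrA -expr2 -E mulr1.
have et : t = qmul (qconj s) Y.
  apply: (qsc_inj q0').
  by rewrite -qsc_mulr -e qmulA qmul_conjl qmul_scall (inA_norm hs).
have ps := inA_par hs; have pt := inA_par ht; have t0pos := inA_pos ht.
have s0pos := inA_pos hs.
clear e hs ht.
move: nY; rewrite (quatE Y) /qnorm2 /= !expr2.
move: et ps pt t0pos s0pos; rewrite (quatE Y) (quatE t) (quatE s).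
case: Y => y0 y1 y2 y3; case: t => t0 t1 t2 t3; case: s => s0 s1 s2 s3 /=.
rewrite /qmul /qconj /= => -[-> -> -> ->] ps pt tp sp nY.
have: -1 <= y0 <= 1 by nia.
have: -1 <= y1 <= 1 by nia.
have: -1 <= y2 <= 1 by nia.
have: -1 <= y3 <= 1 by nia.
move=> /andP[a0 b0] /andP[a1 b1] /andP[a2 b2] /andP[a3 b3].
have [?|[?|?]] : y0 = -1 \/ y0 = 0 \/ y0 = 1 by lia.
all: have [?|[?|?]] : y1 = -1 \/ y1 = 0 \/ y1 = 1 by lia.
all: have [?|[?|?]] : y2 = -1 \/ y2 = 0 \/ y2 = 1 by lia.
all: have [?|[?|?]] : y3 = -1 \/ y3 = 0 \/ y3 = 1 by lia.
all: subst.
all: try (exfalso; lia).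
congr Quat; ring.
Qed.

End TA.

Definition qprod (r : seq quat) : quat := foldr qmul qone r.

Lemma qprod_cat a b : qprod (a ++ b) = qmul (qprod a) (qprod b).
Proof. elim: a => [|s a IH] /=; first by rewrite qmul1l. by rewrite IH qmulA. Qed.

Fixpoint allq (P : quat -> Prop) (r : seq quat) : Prop :=
  match r with [::] => True | s :: r' => P s /\ allq P r' end.

Lemma allq_cat P a b : allq P (a ++ b) <-> allq P a /\ allq P b.
Proof. elim: a => [|s a IH] /=; first by tauto. by rewrite IH; tauto. Qed.

Fixpoint reducedP (r : seq quat) : Prop :=
  match r with
  | s :: r' => (match r' with t :: _ => t <> qconj s | [::] => True end) /\ reducedP r'
  | [::] => True
  end.

Lemma not_reduced_split r : ~ reducedP r ->
  exists r1 r2 s, r = r1 ++ s :: qconj s :: r2.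
Proof.
elim: r => [|s r IH] /=; first by [].
case/not_and_or.
  case: r IH => [|t r] // _ /NNPP ->.
  by exists [::], r, s.
move/IH => [r1 [r2 [s' ->]]].
by exists (s :: r1), r2, s'.
Qed.

Section Red.
Variables (p l q : nat).
Hypothesis oq : odd q.
Hypothesis pq : prime q.
Local Notation inA := (in_tildeAB p l q).

Lemma reduce_ex n t : (size t <= n)%N -> allq inA t ->
  exists r j, [/\ reducedP r, allq inA r, (size r <= size t)%N,
     (~ reducedP t -> (size r < size t)%N) & qprod t = qsc (q%:Z ^+ j) (qprod r)].
Proof.
elim: n t => [|n IH] t.
  case: t => // _ _; exists [::], 0%N; split=> //.
  by move=> h; exfalso; apply: h.
move=> st hat.
have [rt|nrt] := classic (reducedP t).
  by exists t, 0%N; split=> //; rewrite expr0 qsc1.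
have [r1 [r2 [s et]]] := not_reduced_split nrt.
have st' : (size (r1 ++ r2) <= n)%N.
  by move: st; rewrite et !size_cat /=; lia.
have at' : allq inA (r1 ++ r2).
  move: hat; rewrite et !allq_cat /=; tauto.
have [r [j [rr ar sr _ er]]] := IH _ st' at'.
exists r, j.+1; split=> //.
- by move: sr; rewrite et !size_cat /=; lia.
- by move=> _; move: sr; rewrite et !size_cat /=; lia.
have ins : inA s by move: hat; rewrite et allq_cat /=; tauto.
rewrite et qprod_cat /= [qmul s (qmul (qconj s) _)]qmulA qmul_conj (inA_norm ins) qmul_scall qsc_mulr.
by rewrite -qprod_cat er qscM -exprS.
Qed.

Lemma inA_not_dvd s : inA s -> ~~ qdvd q s.
Proof.
move=> hs; have q0' : (q%:Z != 0) by rewrite eqz_nat -lt0n prime_gt0.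
apply/negP => /(qdvdP _ q0') [b eb].
have := congr1 qnorm2 eb; rewrite qnorm2_sc (inA_norm hs) expr2 -mulrA.
rewrite -[X in X = _]mulr1 => /(mulfI q0') e1.
have : (q%:Z %| q%:Z * qnorm2 b)%Z by apply: dvdz_mulr.
rewrite -e1.
by rewrite (negbTE (zprime1 pq)).
Qed.

Lemma reduced_not_dvd r : allq inA r -> reducedP r -> ~~ qdvd q (qprod r).
Proof.
elim: r => [|s r IH] /=.
  move=> _ _; rewrite /qdvd /= dvdz0 andbT.
  have := zprime1 pq; by case: (_ %| _)%Z.
case=> hs ar [hadj rr].
case: r IH ar rr hadj => [|t r] IH ar rr hadj.
  by rewrite /= qmul1; apply: inA_not_dvd.
have nP := IH ar rr.
apply/negP => hd.
have hst : qdvd q (qmul s t).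
  apply: (key_step (Q := qprod r) pq oq) => //.
  by rewrite (inA_norm (proj1 ar)).
have q0' : (q%:Z != 0) by rewrite eqz_nat -lt0n prime_gt0.
case/(qdvdP _ q0'): hst => Y eY.
by apply: hadj; apply: (unit_arg oq pq hs (proj1 ar) eY).
Qed.

Lemma junction r r' : allq inA r -> reducedP r -> reducedP r' -> ~ reducedP (r ++ r') ->
  qdvd q (qprod (r ++ r')).
Proof.
elim: r => [|s r IH] /=; first by move=> _ _ h /(_ h).
case=> hs ar [hadj rr] rr' nr.
case: r IH ar hadj rr nr => [|t r] IH ar hadj rr nr /=.
  clear IH; case: r' rr' nr => [|t r'] /=; first by tauto.
  move=> [h1 h2] nr.
  have e : t = qconj s by apply: NNPP => ne; apply: nr.
  rewrite e qmulA qmul_conj qmul_scall; apply: qdvd_sc.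
  by rewrite (inA_norm hs).
apply: qdvd_mull; apply: (IH ar rr rr').
by move=> h; apply: nr; split.
Qed.
End Red.

Section Fld.
Variables (F : fieldType) (charF : [pchar F] =i pred0) (c d : F).
Hypothesis h : c ^+ 2 + d ^+ 2 + 1 = 0.
Local Notation pm := (psi_mat c d).

Lemma pm_mul x y : pm (qmul x y) = pm x *m pm y.
Proof.
apply/matrixP => i j; rewrite !mxE big_ord_recl big_ord_recl big_ord0 !mxE /=.
case: x => x0 x1 x2 x3; case: y => y0 y1 y2 y3.
case: i => [[|[|i]]] //= _; case: j => [[|[|j]]] //= _; rewrite /qmul /=.
- apply/eqP; rewrite -subr_eq0; apply/eqP.
  transitivity ((c ^+ 2 + d ^+ 2 + 1) * (- ((x1%:~R * y1%:~R) + x3%:~R * y3%:~R))); last by rewrite h mul0r.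
  rewrite !rmorphD !rmorphN !rmorphM /=; ring.
- apply/eqP; rewrite -subr_eq0; apply/eqP.
  transitivity ((c ^+ 2 + d ^+ 2 + 1) * (- ((x1%:~R * y3%:~R) - x3%:~R * y1%:~R))); last by rewrite h mul0r.
  rewrite !rmorphD !rmorphN !rmorphM /=; ring.
- apply/eqP; rewrite -subr_eq0; apply/eqP.
  transitivity ((c ^+ 2 + d ^+ 2 + 1) * (((x1%:~R * y3%:~R) - x3%:~R * y1%:~R))); last by rewrite h mul0r.
  rewrite !rmorphD !rmorphN !rmorphM /=; ring.
- apply/eqP; rewrite -subr_eq0; apply/eqP.
  transitivity ((c ^+ 2 + d ^+ 2 + 1) * (- ((x1%:~R * y1%:~R) + x3%:~R * y3%:~R))); last by rewrite h mul0r.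
  rewrite !rmorphD !rmorphN !rmorphM /=; ring.
Qed.

Lemma intrF_eq0 (k : int) : (k%:~R == 0 :> F) = (k == 0).
Proof.
have cf := (iffLR (pcharf0P F) charF).
case: k => n.
  by change ((n%:R == 0 :> F) = (n == 0)); rewrite cf.
rewrite NegzE mulrNz oppr_eq0 oppr_eq0.
by change (((n.+1)%:R == 0 :> F) = (n.+1 == 0)); rewrite cf.
Qed.

Lemma intrF_inj (a b : int) : (a%:~R = b%:~R :> F) -> a = b.
Proof.
move=> e; apply/eqP; rewrite -subr_eq0 -intrF_eq0.
by rewrite rmorphB /= e subrr.
Qed.

Lemma pm_scal k : pm (qscal k) = (k%:~R : F)%:M.
Proof.
apply/matrixP => -[[|[|i]] Hi] -[[|[|j]] Hj] //; rewrite !mxE /qscal /=.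
all: rewrite ?mul0r ?addr0 ?subr0 ?oppr0 ?add0r ?mulr1n ?mulr0n //.
Qed.

Lemma pm_one : pm qone = 1%:M.
Proof. by rewrite /qone pm_scal. Qed.

Lemma pm_sc k x : pm (qsc k x) = (k%:~R : F) *: pm x.
Proof. by rewrite -qmul_scall pm_mul pm_scal mul_scalar_mx. Qed.

Lemma pm_conj x : pm x *m pm (qconj x) = ((qnorm2 x)%:~R : F)%:M.
Proof. by rewrite -pm_mul qmul_conj pm_scal. Qed.

Lemma pm_inv x : qnorm2 x != 0 ->
  invmx (pm x) = ((qnorm2 x)%:~R : F)^-1 *: pm (qconj x).
Proof.
move=> n0; have n0F : ((qnorm2 x)%:~R : F) != 0 by rewrite intrF_eq0.
have e : pm x *m (((qnorm2 x)%:~R : F)^-1 *: pm (qconj x)) = 1%:M.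
  by rewrite -scalemxAr pm_conj scale_scalar_mx mulVf.
have [u _] := mulmx1_unit e.
by rewrite -[RHS]mul1mx -(mulVmx u) -mulmxA e mulmx1.
Qed.

Lemma pm_inj x y k : k != 0 -> qnorm2 y != 0 -> pm x = k *: pm y ->
  exists z0 : int, z0 != 0 /\ qsc (qnorm2 y) x = qsc z0 y.
Proof.
move=> k0 n0 e.
have ez : pm (qmul x (qconj y)) = (k * (qnorm2 y)%:~R) %:M.
  by rewrite pm_mul e -scalemxAl pm_conj scale_scalar_mx.
set z := qmul x (qconj y) in ez.
pose i0 := (@Ordinal 2 0 isT); pose i1 := (@Ordinal 2 1 isT).
have e00 := congr1 (fun M : 'M[F]_2 => M i0 i0) ez; have e01 := congr1 (fun M : 'M[F]_2 => M i0 i1) ez.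
have e10 := congr1 (fun M : 'M[F]_2 => M i1 i0) ez; have e11 := congr1 (fun M : 'M[F]_2 => M i1 i1) ez.
move: e00 e01 e10 e11; rewrite /= !mxE /=.
set Z0 := (q0 z)%:~R; set Z1 := (q1 z)%:~R; set Z2 := (q2 z)%:~R; set Z3 := (q3 z)%:~R.
rewrite ?mulr1n ?mulr0n => e00 e01 e10 e11.
have two0 : (2 : F) != 0 by rewrite (iffLR (pcharf0P F) charF 2).
have hZ2 : Z2 = 0.
  have : 2 * Z2 = 0.
    have -> : 2 * Z2 = (- (Z1 * d) + Z2 + Z3 * c) - (- (Z1 * d) - Z2 + Z3 * c) by ring.
    by rewrite e01 e10 subrr.
  by move/eqP; rewrite mulf_eq0 (negbTE two0) => /eqP.
have hA : Z1 * c + Z3 * d = 0.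
  have : 2 * (Z1 * c + Z3 * d) = 0.
    have -> : 2 * (Z1 * c + Z3 * d) = (Z0 + Z1 * c + Z3 * d) - (Z0 - Z1 * c - Z3 * d) by ring.
    by rewrite e00 e11 subrr.
  by move/eqP; rewrite mulf_eq0 (negbTE two0) => /eqP.
have hB : Z1 * d - Z3 * c = 0.
  have -> : Z1 * d - Z3 * c = - (- (Z1 * d) + Z2 + Z3 * c) + Z2 by ring.
  by rewrite e01 hZ2 oppr0 addr0.
have hZ1 : Z1 = 0.
  have -> : Z1 = Z1 * (c ^+ 2 + d ^+ 2 + 1) - c * (Z1 * c + Z3 * d) - d * (Z1 * d - Z3 * c) by ring.
  by rewrite h hA hB !mulr0 !subr0.
have hZ3 : Z3 = 0.
  have -> : Z3 = Z3 * (c ^+ 2 + d ^+ 2 + 1) - d * (Z1 * c + Z3 * d) + c * (Z1 * d - Z3 * c) by ring.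
  by rewrite h hA hB !mulr0 subr0 addr0.
move: hZ1 hZ2 hZ3; rewrite /Z1 /Z2 /Z3 => /eqP; rewrite intrF_eq0 => /eqP z1.
move=> /eqP; rewrite intrF_eq0 => /eqP z2 /eqP; rewrite intrF_eq0 => /eqP z3.
have ez' : z = qscal (q0 z) by rewrite [LHS]quatE z1 z2 z3.
exists (q0 z); split.
  rewrite -intrF_eq0 -/Z0.
  have -> : Z0 = k * (qnorm2 y)%:~R.
    by rewrite -e00 -/Z1 -/Z3; move: (z1) (z3); rewrite /Z1 /Z3 => -> ->; rewrite !mul0r !addr0.
  by rewrite mulf_neq0 // intrF_eq0.
rewrite -[qsc (q0 z) y]qmul_scall -ez' /z -qmulA qmul_conjl.
by rewrite qmul_scalr.
Qed.
End Fld.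

Definition lv (bs : bool * quat) : quat := if bs.1 then bs.2 else qconj bs.2.

Section Fld2.
Variables (F : fieldType) (charF : [pchar F] =i pred0) (c d : F).
Hypothesis h : c ^+ 2 + d ^+ 2 + 1 = 0.
Local Notation pm := (psi_mat c d).

Definition simF (A B : 'M[F]_2) := exists k : F, k != 0 /\ B = k *: A.

Lemma simF_refl A : simF A A.
Proof. by exists 1; rewrite oner_neq0 scale1r. Qed.

Lemma simF_sym A B : simF A B -> simF B A.
Proof.
case=> k [k0 ->]; exists k^-1; split; first by rewrite invr_eq0.
by rewrite scalerA mulVf // scale1r.
Qed.

Lemma simF_trans A B C : simF A B -> simF B C -> simF A C.
Proof.
case=> k [k0 ->] [m [m0 ->]]; exists (m * k); split; first by rewrite mulf_neq0.
by rewrite scalerA.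
Qed.

Lemma simF_mul A B A' B' : simF A A' -> simF B B' -> simF (A *m B) (A' *m B').
Proof.
case=> k [k0 ->] [m [m0 ->]]; exists (k * m); split; first by rewrite mulf_neq0.
by rewrite -scalemxAl -scalemxAr scalerA.
Qed.

Lemma simF_sc k x : k != 0 -> simF (pm x) (pm (qsc k x)).
Proof. by move=> k0; exists k%:~R; rewrite (pm_sc h) (intrF_eq0 charF). Qed.

Definition wf (w : seq (bool * quat)) : 'M[F]_2 :=
  foldr (fun bs acc => (if bs.1 then pm bs.2 else invmx (pm bs.2)) *m acc) 1%:M w.

Lemma wf_sim w : (forall bs, List.In bs w -> qnorm2 bs.2 != 0) ->
  simF (pm (qprod (map lv w))) (wf w).
Proof.
elim: w => [|[b s] w IH] /= hw; first by rewrite pm_one; apply: simF_refl.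
rewrite (pm_mul h); apply: simF_mul; last by apply: IH => bs hb; apply: hw; right.
have ns : qnorm2 s != 0 by apply: (hw (b, s)); left.
case: b {hw} => /=; first by apply: simF_refl.
rewrite (pm_inv charF h) //; exists ((qnorm2 s)%:~R)^-1; split=> //.
by rewrite invr_eq0 (intrF_eq0 charF).
Qed.

End Fld2.

Lemma gcd3_dvd (d a c1 c2 c3 : int) : gcdz (gcdz c1 c2) c3 = 1 ->
  (d %| a * c1)%Z -> (d %| a * c2)%Z -> (d %| a * c3)%Z -> (d %| a)%Z.
Proof.
move=> g h1 h2 h3.
have [u [v e1]] := Bezoutz c1 c2.
have [u' [v' e2]] := Bezoutz (gcdz c1 c2) c3.
rewrite g -e1 in e2.
have -> : a = (u' * u) * (a * c1) + (u' * v) * (a * c2) + v' * (a * c3).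
  by rewrite -[LHS]mulr1 -e2; ring.
by rewrite !rpredD // dvdz_mull.
Qed.

Lemma zdecomp (q : nat) (z : int) : prime q -> z != 0 ->
  exists e z', z = q%:Z ^+ e * z' /\ ~~ (q%:Z %| z')%Z.
Proof.
move=> pq z0.
have az : (0 < `|z|)%N by rewrite absz_gt0.
have [m cm em] := pfactor_coprime pq az.
set L := logn q `|z| in em *.
exists L, ((-1) ^+ (z < 0)%R * m%:Z); split.
  have ez := intEsign z.
  by rewrite {1}ez em PoszM rmorphXn /=; ring.
by rewrite dvdzE abszMsign /= -prime_coprime.
Qed.

Lemma val_eq (q : nat) (A B : nat) (X Y : int) : prime q ->
  q%:Z ^+ A * X = q%:Z ^+ B * Y -> ~~ (q%:Z %| X)%Z -> ~~ (q%:Z %| Y)%Z -> A = B.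
Proof.
move=> pq.
have q0 : q%:Z != 0 by rewrite eqz_nat -lt0n prime_gt0.
wlog le : A B X Y / (A <= B)%N.
  move=> W e hx hy; case: (leqP A B) => h; first exact: W e hx hy.
  by apply/esym; apply: (W B A Y X) => //; exact: ltnW.
move=> e hx hy; apply/eqP; rewrite eqn_leq le /=; apply: contraT; rewrite -ltnNge => lt.
move: e; rewrite -(subnKC le) exprD -mulrA => /(mulfI (expf_neq0 _ q0)) e.
case/negP: hx; rewrite e; apply: dvdz_mulr.
by rewrite -(subnSK lt) exprS dvdz_mulr.
Qed.

Lemma lower_val (q : nat) (R V : quat) (al m : nat) (K z0 : int) : prime q ->
  ~~ (q%:Z %| K)%Z -> qnorm2 V = q%:Z ^+ al * K -> qnorm2 R = q%:Z ^+ m ->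
  ~~ qdvd q R -> z0 != 0 -> qsc (qnorm2 V) R = qsc z0 V -> (m <= al)%N.
Proof.
move=> pq nK nV nR ndR z00 e.
have q0 : q%:Z != 0 by rewrite eqz_nat -lt0n prime_gt0.
have K0 : K != 0 by apply: contraNneq nK => ->; rewrite dvdz0.
have NV0 : qnorm2 V != 0 by rewrite nV mulf_neq0 // expf_neq0.
have [ee [z' [ez nz']]] := zdecomp pq z00.
have hn := congr1 qnorm2 e; rewrite !qnorm2_sc in hn.
have hn2 : q%:Z ^+ (al + m) * K = q%:Z ^+ (ee.*2) * z' ^+ 2.
  apply: (mulfI NV0).
  transitivity (qnorm2 V ^+ 2 * qnorm2 R).
    by rewrite nR nV exprD; ring.
  by rewrite hn ez -addnn exprD; ring.
have ev := val_eq pq hn2 nK; rewrite zprimeX // in ev; have {}ev := ev nz'.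
case: (leqP ee al) => hle; first by move: ev; lia.
exfalso; case/negP: ndR.
have key (a b : int) : q%:Z ^+ al * K * a = z0 * b -> (q%:Z %| a)%Z.
  move=> hab.
  have : (q%:Z ^+ al * q%:Z %| q%:Z ^+ al * (K * a))%Z.
    rewrite mulrA hab ez -mulrA; apply: dvdz_mulr.
    by rewrite -exprSr dvdz_exp2l.
  rewrite dvdz_mul2l ?expf_neq0 // zprimeM // (negbTE nK) /=.
  by [].
move: e; rewrite nV (quatE R) (quatE V) /qsc /= => -[e0 e1 e2 e3].
by apply/and4P; split; apply: key; eassumption.
Qed.

Lemma nt_lemma (q : nat) (R : quat) (m : nat) (zz c1 c2 c3 : int) : prime q -> odd q ->
  gcdz (gcdz c1 c2) c3 = 1 -> (0 < m)%N -> qnorm2 R = q%:Z ^+ m -> ~~ qdvd q R ->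
  q1 R = zz * c1 -> q2 R = zz * c2 -> q3 R = zz * c3 ->
  ((q%:Z %| c1 ^+ 2 + c2 ^+ 2 + c3 ^+ 2)%Z <-> qdvd q (qmul R R)) /\
  (~~ (q%:Z %| c1 ^+ 2 + c2 ^+ 2 + c3 ^+ 2)%Z -> legendre (- (c1 ^+ 2 + c2 ^+ 2 + c3 ^+ 2)) q = 1).
Proof.
move=> pq oq g m0 nR ndR e1 e2 e3.
set n := c1 ^+ 2 + c2 ^+ 2 + c3 ^+ 2.
move: nR ndR; rewrite (quatE R) e1 e2 e3; set R0 := q0 R => nR ndR.
have hN : R0 ^+ 2 + zz ^+ 2 * n = q%:Z ^+ m by rewrite -nR /qnorm2 /n /=; ring.
have qN : (q%:Z %| R0 ^+ 2 + zz ^+ 2 * n)%Z by rewrite hN -(prednK m0) exprS dvdz_mulr.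
have RR : qmul (Quat R0 (zz * c1) (zz * c2) (zz * c3)) (Quat R0 (zz * c1) (zz * c2) (zz * c3))
   = Quat (R0 ^+ 2 - zz ^+ 2 * n) (2 * R0 * zz * c1) (2 * R0 * zz * c2) (2 * R0 * zz * c3).
  by rewrite /qmul /n /=; congr Quat; ring.
have nz_zz : ~~ (q%:Z %| zz)%Z -> True by [].
(* if q | zz and q | R0 then q | R *)
have ndR' : ~ ((q%:Z %| R0)%Z /\ (q%:Z %| zz)%Z).
  case=> h1 h2; case/negP: ndR; rewrite /qdvd /=.
  by rewrite h1 !dvdz_mulr.
have R0sq : (q%:Z %| R0 ^+ 2)%Z = (q%:Z %| R0)%Z by rewrite zprimeX.
split.
  rewrite RR; split.
    move=> qn.
    have qR0 : (q%:Z %| R0)%Z.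
      rewrite -R0sq.
      have -> : R0 ^+ 2 = (R0 ^+ 2 + zz ^+ 2 * n) - zz ^+ 2 * n by ring.
      by rewrite rpredB // dvdz_mull.
    apply/and4P; split => /=.
    - by rewrite rpredB ?R0sq // dvdz_mull.
    - exact: (dvdz_mulr _ (dvdz_mulr _ (dvdz_mull 2 qR0))).
    - exact: (dvdz_mulr _ (dvdz_mulr _ (dvdz_mull 2 qR0))).
    - exact: (dvdz_mulr _ (dvdz_mulr _ (dvdz_mull 2 qR0))).
  case/and4P => /= h0 h1 h2 h3.
  have h : (q%:Z %| 2 * R0 * zz)%Z.
    by apply: (gcd3_dvd g); rewrite ?h1 ?h2 ?h3.
  rewrite !zprimeM // (negbTE (zprime2 pq oq)) /= in h.
  have hR0 : (q%:Z %| R0)%Z.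
    case/orP: h => // hz.
    rewrite -R0sq.
    have -> : R0 ^+ 2 = (R0 ^+ 2 - zz ^+ 2 * n) + zz ^+ 2 * n by ring.
    by rewrite rpredD // dvdz_mulr // zprimeX.
  have : (q%:Z %| zz ^+ 2 * n)%Z.
    have -> : zz ^+ 2 * n = (R0 ^+ 2 + zz ^+ 2 * n) - R0 ^+ 2 by ring.
    by rewrite rpredB // R0sq.
  rewrite zprimeM // zprimeX //.
  case/orP => // hz; by exfalso; apply: ndR'.
move=> nqn.
have nzz : ~~ (q%:Z %| zz)%Z.
  apply/negP => hz; apply: ndR'; split => //.
  rewrite -R0sq.
  have -> : R0 ^+ 2 = (R0 ^+ 2 + zz ^+ 2 * n) - zz ^+ 2 * n by ring.
  by rewrite rpredB // dvdz_mulr // zprimeX.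
have cop : coprimez zz q.
  by rewrite coprimezE coprime_sym prime_coprime // -dvdzE.
case/coprimezP: cop => -[u v] /= euv.
have q0 : q%:Z != 0 by rewrite eqz_nat -lt0n prime_gt0.
have qpos : (0 : int) < q%:Z by rewrite ltz_nat prime_gt0.
set y := ((R0 * u) %% q%:Z)%Z.
have y0 : 0 <= y by apply: modz_ge0.
have yq : y < q%:Z by apply: ltz_pmod.
have yn : (`|y| < q)%N by rewrite -ltz_nat gez0_abs.
have ey : y = R0 * u - ((R0 * u) %/ q%:Z)%Z * q%:Z.
  move: (divz_eq (R0 * u) q%:Z); rewrite -/y.
  set D := ((R0 * u) %/ q%:Z)%Z => E.
  by rewrite {1}E; ring.
have hy : (q%:Z %| y ^+ 2 + n)%Z.
  have : (q%:Z %| zz ^+ 2 * (y ^+ 2 + n))%Z.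
    have -> : zz ^+ 2 * (y ^+ 2 + n) = (zz * y - R0) * (zz * y + R0) + (R0 ^+ 2 + zz ^+ 2 * n) by ring.
    rewrite rpredD // dvdz_mulr //.
    have -> : zz * y - R0 = q%:Z * (- R0 * v - zz * ((R0 * u) %/ q%:Z)%Z).
      rewrite ey; transitivity (R0 * (u * zz + v * q%:Z - 1) + q%:Z * (- R0 * v - zz * ((R0 * u) %/ q%:Z)%Z)).
        ring.
      by rewrite euv subrr mulr0 add0r.
    exact: dvdz_mulr.
  by rewrite zprimeM // zprimeX // (negbTE nzz).
rewrite /legendre rpredN (negbTE nqn).
case: existsP => // -[]; exists (Ordinal yn) => /=.
by rewrite gez0_abs // opprK.
Qed.

Section Main.
Variables (Fp Fl : fieldType) (charFp : [pchar Fp] =i pred0) (charFl : [pchar Fl] =i pred0)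
  (p l : nat) (prime_p : prime p) (prime_l : prime l) (odd_p : odd p) (odd_l : odd l) (pl : p != l)
  (cp dp : Fp) (cl dl : Fl)
  (hp : cp ^+ 2 + dp ^+ 2 + 1 = 0) (hl : cl ^+ 2 + dl ^+ 2 + 1 = 0).
Variables q q' : nat.
Hypothesis hqq : (q = p /\ q' = l) \/ (q = l /\ q' = p).

Local Notation ps := (psi cp dp cl dl).
Local Notation inA := (in_tildeAB p l q).
Local Notation inB := (in_tildeAB p l q').
Local Notation ellg := (ell cp dp cl dl p l).

Lemma pq : prime q. Proof. by case: hqq => -[-> _]. Qed.
Lemma oq : odd q. Proof. by case: hqq => -[-> _]. Qed.
Lemma pq' : prime q'. Proof. by case: hqq => -[_ ->]. Qed.
Lemma qq' : q != q'. Proof. by case: hqq => -[-> ->] //; rewrite eq_sym. Qed.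

Lemma gen_letterE s : gen_letter p l s <-> inA s \/ inB s.
Proof. rewrite /gen_letter; case: hqq => -[-> ->]; tauto. Qed.

Lemma pgl_eqE (A B : Gpair Fp Fl) : pgl_eq A B <-> simF A.1 B.1 /\ simF A.2 B.2.
Proof.
split; first by case=> [k [m [k0 [m0 [e1 e2]]]]]; split; [exists k | exists m].
by case=> [[k [k0 e1]] [m [m0 e2]]]; exists k, m.
Qed.

Lemma pgl_sym (A B : Gpair Fp Fl) : pgl_eq A B -> pgl_eq B A.
Proof. by rewrite !pgl_eqE => -[h1 h2]; split; apply: simF_sym. Qed.

Lemma pgl_trans (A B C : Gpair Fp Fl) : pgl_eq A B -> pgl_eq B C -> pgl_eq A C.
Proof.
rewrite !pgl_eqE => -[h1 h2] [g1 g2]; split; [exact: simF_trans h1 g1 | exact: simF_trans h2 g2].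
Qed.

Lemma pgl_gmul (A A' B B' : Gpair Fp Fl) : pgl_eq A A' -> pgl_eq B B' -> pgl_eq (gmul A B) (gmul A' B').
Proof.
rewrite !pgl_eqE => -[h1 h2] [g1 g2]; split; [exact: simF_mul h1 g1 | exact: simF_mul h2 g2].
Qed.

Lemma psi_mul x y : ps (qmul x y) = gmul (ps x) (ps y).
Proof. by rewrite /psi /gmul /= (pm_mul hp) (pm_mul hl). Qed.

Lemma psi_one : ps qone = gone Fp Fl.
Proof. by rewrite /psi /gone !pm_one. Qed.

Lemma psi_sc k x : k != 0 -> pgl_eq (ps x) (ps (qsc k x)).
Proof. by move=> k0; rewrite pgl_eqE; split; apply: simF_sc. Qed.

Lemma word_valE w : word_val cp dp cl dl w = (wf cp dp w, wf cl dl w).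
Proof. by elim: w => [|[[] s] w IH] //=; rewrite IH. Qed.

Lemma word_sim w : (forall bs, List.In bs w -> qnorm2 bs.2 != 0) ->
  pgl_eq (ps (qprod (map lv w))) (word_val cp dp cl dl w).
Proof. by move=> hw; rewrite word_valE pgl_eqE; split; apply: wf_sim. Qed.

Lemma psi_inj x y : pgl_eq (ps y) (ps x) -> qnorm2 y != 0 ->
  exists z0, z0 != 0 /\ qsc (qnorm2 y) x = qsc z0 y.
Proof.
rewrite pgl_eqE => -[[k [k0 e]] _] ny.
exact: (pm_inj charFp hp k0 ny e).
Qed.

Lemma q_neq0 : q%:Z != 0. Proof. by rewrite eqz_nat -lt0n prime_gt0 // pq. Qed.
Lemma q'_neq0 : q'%:Z != 0. Proof. by rewrite eqz_nat -lt0n prime_gt0 // pq'. Qed.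

Lemma inA_nz s : inA s -> qnorm2 s != 0.
Proof. by move/(inA_norm); move=> ->; apply: q_neq0. Qed.
Lemma inB_nz s : inB s -> qnorm2 s != 0.
Proof. by move/(inA_norm); move=> ->; apply: q'_neq0. Qed.

Lemma norm_prodA r : allq inA r -> qnorm2 (qprod r) = q%:Z ^+ size r.
Proof.
elim: r => [|s r IH] /=; first by move=> _; rewrite /qnorm2 /=; ring.
by case=> hs hr; rewrite qnorm2M IH // (inA_norm hs) exprS.
Qed.

Lemma word_norm w : (forall bs, List.In bs w -> gen_letter p l bs.2) ->
  exists a b, (a + b = size w)%N /\ qnorm2 (qprod (map lv w)) = q%:Z ^+ a * q'%:Z ^+ b.
Proof.
elim: w => [|bs w IH] /= hw; first by exists 0%N, 0%N; split=> //; rewrite /qnorm2 /=; ring.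
have [a [b [e1 e2]]] := IH (fun bs' h => hw bs' (or_intror h)).
have nlv : qnorm2 (lv bs) = qnorm2 bs.2 by rewrite /lv; case: bs.1 => //; rewrite qnorm2_conj.
rewrite qnorm2M e2 nlv.
case/gen_letterE: (hw bs (or_introl erefl)) => /inA_norm ->.
  by exists a.+1, b; split; [rewrite -e1 | rewrite exprS; ring].
by exists a, b.+1; split; [rewrite -e1 addnS | rewrite exprS; ring].
Qed.


Lemma lower r w : allq inA r -> reducedP r ->
  (forall bs, List.In bs w -> gen_letter p l bs.2) ->
  pgl_eq (word_val cp dp cl dl w) (ps (qprod r)) -> (size r <= size w)%N.
Proof.
move=> ar rr hw he.
have hnz : forall bs, List.In bs w -> qnorm2 bs.2 != 0.
  by move=> bs /hw /gen_letterE [/inA_nz|/inB_nz].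
have hVR := pgl_trans (word_sim hnz) he.
have [a [b [eab nV]]] := word_norm hw.
have nV0 : qnorm2 (qprod (map lv w)) != 0.
  by rewrite nV mulf_neq0 // expf_neq0 // ?q_neq0 ?q'_neq0.
have [z0 [z00 ez]] := psi_inj hVR nV0.
have nK : ~~ (q%:Z %| q'%:Z ^+ b)%Z.
  case: b {eab nV nV0 ez} => [|b]; first by rewrite expr0 zprime1 // pq.
  rewrite zprimeX ?pq // dvdzE /= dvdn_prime2 ?pq ?pq' //.
  exact: qq'.
have := lower_val pq nK nV (norm_prodA ar) (reduced_not_dvd oq pq ar rr) z00 ez.
by rewrite -eab => h; apply: (leq_trans h); apply: leq_addr.
Qed.

Lemma allq_map_true r : allq inA r -> forall bs, List.In bs (map (fun s => (true, s)) r) -> inA bs.2.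
Proof.
elim: r => [|s r IH] //= [hs hr] bs [<-|h] //.
exact: IH.
Qed.

Lemma map_lv_true r : map lv (map (fun s => (true, s)) r) = r.
Proof. by elim: r => //= s r ->. Qed.

Lemma ell_eq r g : allq inA r -> reducedP r -> pgl_eq (ps (qprod r)) g -> ellg g = size r.
Proof.
move=> ar rr hg.
have hw : is_word_length cp dp cl dl p l g (size r).
  split.
    exists (map (fun s => (true, s)) r); split; first by rewrite size_map.
    split.
      by move=> bs /(allq_map_true ar) h; apply/gen_letterE; left.
    apply: pgl_trans _ hg; apply: pgl_sym.
    have := word_sim (w := map (fun s => (true, s)) r).
    rewrite map_lv_true; apply=> bs /(allq_map_true ar); exact: inA_nz.
  move=> w hw hv; apply: lower ar rr hw _.
  exact: pgl_trans hv (pgl_sym hg).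
have hs := epsilon_spec (inhabits 0%N) (is_word_length cp dp cl dl p l g) (ex_intro _ _ hw).
rewrite /ell; set k := epsilon _ _ in hs *.
case: hs => [[w1 [s1 [h1 v1]]] m1]; case: hw => [[w2 [s2 [h2 v2]]] m2].
apply/eqP; rewrite eqn_leq; apply/andP; split.
  by rewrite -s2; apply: m1.
by rewrite -s1; apply: m2.
Qed.

Lemma allq_lv w : (forall bs, List.In bs w -> inA bs.2) -> allq inA (map lv w).
Proof.
elim: w => [|bs w IH] //= hw; split; last by apply: IH => bs' h; apply: hw; right.
have := hw bs (or_introl erefl); rewrite /lv; case: bs.1 => // h.
exact: inA_conj.
Qed.

Lemma inGamma_red x : in_Gamma_q cp dp cl dl p l q (ps x) ->
  exists r, [/\ allq inA r, reducedP r & pgl_eq (ps (qprod r)) (ps x)].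
Proof.
case=> w [hw hv].
have at' := allq_lv hw.
have hnz : forall bs, List.In bs w -> qnorm2 bs.2 != 0 by move=> bs /hw; exact: inA_nz.
have [r [j [rr ar _ _ er]]] := reduce_ex oq pq (leqnn _) at'.
exists r; split=> //.
have e1 : pgl_eq (ps (qprod r)) (ps (qprod (map lv w))).
  by rewrite er; apply: psi_sc; apply: expf_neq0; exact: q_neq0.
exact: pgl_trans e1 (pgl_trans (word_sim hnz) hv).
Qed.


Lemma main_q (x : quat) (z0 c1 c2 c3 : int) :
     in_Gamma_q cp dp cl dl p l q (ps x) ->
     ~ pgl_eq (ps x) (gone Fp Fl) ->
     z0 != 0 -> gcdz (gcdz c1 c2) c3 = 1 ->
     q1 x = z0 * c1 -> q2 x = z0 * c2 -> q3 x = z0 * c3 ->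
     let n := c1 ^+ 2 + c2 ^+ 2 + c3 ^+ 2 in
     let a := ps x in
     (~~ (q%:Z %| n)%Z <-> ellg (gmul a a) = (2 * ellg a)%N) /\
     (ellg (gmul a a) = (2 * ellg a)%N <-> legendre (- n) q = 1).
Proof.
move=> hG hne z00 g e1 e2 e3 n a.
have [r [ar rr hr]] := inGamma_red hG.
have m0 : (0 < size r)%N.
  rewrite lt0n; apply/negP => /eqP /size0nil r0; apply: hne.
  by move: hr; rewrite r0 /= psi_one => /pgl_sym.
set R := qprod r.
have ella : ellg a = size r by apply: ell_eq ar rr hr.
have haa : pgl_eq (ps (qprod (r ++ r))) (gmul a a).
  by rewrite qprod_cat psi_mul; apply: pgl_gmul.
have ar2 : allq inA (r ++ r) by apply/allq_cat.
have hE : ellg (gmul a a) = (2 * ellg a)%N <-> ~~ qdvd q (qmul R R).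
  rewrite ella; split.
    move=> he; apply/negP => hd.
    have nr : ~ reducedP (r ++ r).
      by move=> h; move: (reduced_not_dvd oq pq ar2 h); rewrite qprod_cat hd.
    have [r' [j [rr' ar' _ lt' er']]] := reduce_ex oq pq (leqnn _) ar2.
    have h' : pgl_eq (ps (qprod r')) (gmul a a).
      apply: pgl_trans haa; rewrite er'; apply: psi_sc; apply: expf_neq0; exact: q_neq0.
    move: he; rewrite (ell_eq ar' rr' h') => he.
    by move: (lt' nr); rewrite size_cat he; lia.
  move=> nd.
  have r2 : reducedP (r ++ r).
    apply: NNPP => nr; case/negP: nd; rewrite -qprod_cat.
    exact: (junction ar rr rr nr).
  by rewrite (ell_eq ar2 r2 haa) size_cat; lia.
have nR : qnorm2 R = q%:Z ^+ size r by apply: norm_prodA.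
have nR0 : qnorm2 R != 0 by rewrite nR expf_neq0 // q_neq0.
have [z1 [z10 ez]] := psi_inj hr nR0.
have dvd_i (c : int) (Ri : int) : q%:Z ^+ size r * (z0 * c) = z1 * Ri -> (z1 %| (q%:Z ^+ size r * z0) * c)%Z.
  by move=> h; rewrite -mulrA h dvdz_mulr.
move: ez; rewrite nR /qsc e1 e2 e3 => -[_ f1 f2 f3].
have hz : (z1 %| q%:Z ^+ size r * z0)%Z.
  by apply: (gcd3_dvd g); apply: dvd_i; eassumption.
case/dvdzP: hz => zz ezz.
have gR (c : int) (Ri : int) : q%:Z ^+ size r * (z0 * c) = z1 * Ri -> Ri = zz * c.
  move=> h; apply: (mulfI z10); rewrite -h mulrA ezz; ring.
have [nt1 nt2] := nt_lemma pq oq g m0 nR (reduced_not_dvd oq pq ar rr)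
  (gR _ _ f1) (gR _ _ f2) (gR _ _ f3).
split.
  split; first by move=> h; apply/hE; apply: contra h => /nt1.
  by move/hE => h; apply/negP => /nt1 h'; rewrite h' in h.
split.
  move/hE => h; apply: nt2; apply/negP => /nt1 h'; by rewrite h' in h.
rewrite /legendre rpredN; case: ifP => // nqn _.
apply/hE; apply/negP => /nt1; by rewrite nqn.
Qed.

End Main.

Unset Implicit Arguments. Set Strict Implicit.

Theorem lemma3p3
  (Fp Fl : fieldType) (charFp : [pchar Fp] =i pred0) (charFl : [pchar Fl] =i pred0)
  (p l : nat) (prime_p : prime p) (prime_l : prime l)
  (odd_p : odd p) (odd_l : odd l) (pl : p != l)
  (cp dp : Fp) (cl dl : Fl)
  (hp : cp ^+ 2 + dp ^+ 2 + 1 = 0) (hl : cl ^+ 2 + dl ^+ 2 + 1 = 0) :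
  (forall (x : quat) (z0 c1 c2 c3 : int),
     in_Gtilde p l x ->
     in_Gamma_q cp dp cl dl p l p (psi cp dp cl dl x) ->
     ~ pgl_eq (psi cp dp cl dl x) (gone Fp Fl) ->
     z0 != 0 -> gcdz (gcdz c1 c2) c3 = 1 ->
     q1 x = z0 * c1 -> q2 x = z0 * c2 -> q3 x = z0 * c3 ->
     let n := c1 ^+ 2 + c2 ^+ 2 + c3 ^+ 2 in
     let a := psi cp dp cl dl x in
     (~~ (p%:Z %| n)%Z <->
        ell cp dp cl dl p l (gmul a a) = (2 * ell cp dp cl dl p l a)%N) /\
     (ell cp dp cl dl p l (gmul a a) = (2 * ell cp dp cl dl p l a)%N <->
        legendre (- n) p = 1)) /\
  (forall (y : quat) (z0 c1 c2 c3 : int),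
     in_Gtilde p l y ->
     in_Gamma_q cp dp cl dl p l l (psi cp dp cl dl y) ->
     ~ pgl_eq (psi cp dp cl dl y) (gone Fp Fl) ->
     z0 != 0 -> gcdz (gcdz c1 c2) c3 = 1 ->
     q1 y = z0 * c1 -> q2 y = z0 * c2 -> q3 y = z0 * c3 ->
     let n := c1 ^+ 2 + c2 ^+ 2 + c3 ^+ 2 in
     let b := psi cp dp cl dl y in
     (~~ (l%:Z %| n)%Z <->
        ell cp dp cl dl p l (gmul b b) = (2 * ell cp dp cl dl p l b)%N) /\
     (ell cp dp cl dl p l (gmul b b) = (2 * ell cp dp cl dl p l b)%N <->
        legendre (- n) l = 1)).
Proof.
split.
  move=> x z0 c1 c2 c3 _.
  exact: (main_q charFp charFl prime_p prime_l odd_p odd_l pl hp hl (q := p) (q' := l) (or_introl (conj erefl erefl))).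
move=> x z0 c1 c2 c3 _.
exact: (main_q charFp charFl prime_p prime_l odd_p odd_l pl hp hl (q := l) (q' := p) (or_intror (conj erefl erefl))).
Qed.
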